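(* Let $T$ be a map on $[0,1]$ and $\nu$ a $T$-invariant exponentially mixing probability measure. Let $s\ge0$. Then for $\nu$-a.e. $x$, $\{y:\overline R(x,y)\ge s\}\subset\{y:\overline d_\nu(y)\ge s\}$.
   Context: A $T$-invariant measure $\nu$ on $[0,1]$ is exponentially mixing if there exist $C>0$ and $0<\beta<1$ such that for every ball $A$, every Borel set $B$ and every $n\ge1$, $|\nu(A\cap T^{-n}B)-\nu(A)\nu(B)|\le C\beta^n\nu(B)$. $B(y,r)$ is the open ball. $\tau_r(x,y)=\inf\{n\ge1:T^nx\in B(y,r)\}$ and $\overline R(x,y)=\limsup_{r\to0}\frac{\log\tau_r(x,y)}{-\log r}$, with $\tau_r(x,y)=\infty$ and $\overline R(x,y)=\infty$ when the forward orbit $\{T^nx:n\ge1\}$ misses $B(y,r)$. $\overline d_\nu(y)=\limsup_{r\to0}\frac{\log\nu(B(y,r))}{\log r}$. *)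

(* Defs.v *)
(* The phase space [0,1] is modelled inside R:
   the measure is a probability on R concentrated on `[0,1], T maps [0,1] into itself. *)
From HB Require Import structures.
From mathcomp Require Import all_boot all_order all_algebra.
From mathcomp Require Import all_classical all_reals all_analysis.
Set Implicit Arguments. Unset Strict Implicit. Unset Printing Implicit Defensive.
Import Order.TTheory GRing.Theory Num.Theory.
Import numFieldNormedType.Exports.
Local Open Scope classical_set_scope.
Local Open Scope ring_scope.

Section Defs.
Context {R : realType}.

Definition I01 : set R := `[0%R, 1%R].

Definition limsup0 (g : R -> \bar R) : \bar R :=
  ereal_inf [set ereal_sup [set g r | r in [set r : R | 0 < r < delta]]
            | delta in [set delta : R | 0 < delta]].

(* log tau_r(x,y) / (- log r), with value +oo when the forward orbit misses B(y,r);
   tau_r(x,y) = inf{ n >= 1 : T^n x \in B(y,r) } *)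
Definition log_tau_ratio (T : R -> R) (x y r : R) : \bar R :=
  match pselect (exists n : nat, (1 <= n)%N /\ ball y r (iter n T x)) with
  | left h => ((ln (xget 0%N [set n : nat | (1 <= n)%N /\ ball y r (iter n T x)
                 /\ forall m : nat, (1 <= m)%N -> ball y r (iter m T x) -> (n <= m)%N])%:R)
               / (- ln r))%:E
  | right _ => +oo%E
  end.

Definition upper_rec (T : R -> R) (x y : R) : \bar R :=
  limsup0 (log_tau_ratio T x y).

(* log nu(B(y,r)) / log r, with log 0 = -oo giving +oo *)
Definition log_ball_ratio (nu : set R -> \bar R) (y r : R) : \bar R :=
  if fine (nu (ball y r)) == 0 then +oo%E
  else (ln (fine (nu (ball y r))) / ln r)%:E.

Definition upper_dim (nu : set R -> \bar R) (y : R) : \bar R :=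
  limsup0 (log_ball_ratio nu y).

(* T-invariance of nu (T viewed as a map of [0,1]) *)
Definition T_invariant (T : R -> R) (nu : set R -> \bar R) : Prop :=
  forall B : set R, measurable B -> nu (I01 `&` T @^-1` B) = nu B.

(* exponential mixing: balls A of [0,1] are ball c r `&` [0,1], c \in [0,1] *)
Definition exp_mixing (T : R -> R) (nu : set R -> \bar R) : Prop :=
  exists C beta : R, 0 < C /\ 0 < beta < 1 /\
    forall (c r : R) (B : set R) (n : nat), c \in I01 -> measurable B -> (1 <= n)%N ->
      let A := ball c r `&` I01 in
      (`| nu (A `&` (iter n T) @^-1` B) - nu A * nu B | <= (C * beta ^+ n)%:E * nu B)%E.

End Defs.

(* Main.v *)
Require Import Defs.
From HB Require Import structures.
From mathcomp Require Import all_boot all_order all_algebra.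
From mathcomp Require Import all_classical all_reals all_analysis.
From mathcomp Require Import measurable_realfun lra ring zify.
Import Order.TTheory GRing.Theory Num.Theory.
Import numFieldNormedType.Exports.
Local Open Scope classical_set_scope.
Local Open Scope ring_scope.


Section Asym.
Context {R : realType} (t u : R) (t0 : 0 <= t) (tu : t < u) (G : nat).

Definition mk (k : nat) : R := expR (- (t * (k%:R + 3))).
Definition qk k := (Num.truncn ((4 * k%:R + 10) / mk k)).+1.
Definition gk k := (G * k.+1)%N.
Definition Nk k := (qk k * gk k)%N.
Definition K0 := (Num.truncn (360 * G%:R * expR (3 * t) / (u - t) ^+ 3)).+1.

Lemma mk_gt0 k : 0 < mk k. Proof. exact: expR_gt0. Qed.

Lemma mk_le1 k : mk k <= 1.
Proof. rewrite /mk expR_le1 oppr_le0; apply: mulr_ge0 => //; lra. Qed.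

Lemma invmk k : (mk k)^-1 = expR (t * (k%:R + 3)).
Proof. by rewrite /mk expRN invrK. Qed.

Lemma qk_ge k : (4 * k%:R + 10) / mk k <= (qk k)%:R.
Proof. by rewrite /qk ltW // truncnS_gt. Qed.

Lemma qk_le k : (qk k)%:R <= (4 * k%:R + 11) * expR (t * (k%:R + 3)).
Proof.
rewrite /qk -addn1 natrD.
have h := truncn_le ((4 * k%:R + 10) / mk k).
have h0 : 0 <= (4 * k%:R + 10) / mk k by rewrite divr_ge0 // ltW // mk_gt0.
rewrite h0 invmk in h; rewrite invmk.
have e1 : 1 <= expR (t * (k%:R + 3)) by rewrite -expR0 ler_expR; apply: mulr_ge0 => //; lra.
lra.
Qed.

Lemma F2 k : (K0 <= k)%N -> (Nk k)%:R <= expR (u * k%:R).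
Proof.
move=> Kk.
set E := expR (3 * t).
set e := u - t.
have e0 : 0 < e by rewrite /e subr_gt0.
have k1 : (1 <= k)%N by apply: leq_trans Kk.
have k1r : 1 <= (k%:R : R) by rewrite ler1n.
have hK : 360 * G%:R * E / e ^+ 3 < k%:R.
  apply: (lt_le_trans (truncnS_gt _)); rewrite ler_nat; exact: Kk.
have hK' : 360 * G%:R * E <= k%:R * e ^+ 3.
  by rewrite -ler_pdivrMr ?exprn_gt0 // ltW.
have ex : (e * k%:R) ^+ 3 / 6 <= expR (e * k%:R).
  have := @expR_ge1Dxn R (e * k%:R) 2 (mulr_ge0 (ltW e0) (ler0n _ _)).
  have -> : (3`!%:R : R) = 6 by rewrite /factorial /=.
  move=> h; apply: le_trans h; lra.
have split : expR (u * k%:R) = expR (t * (k%:R + 3)) * (expR (e * k%:R) / E).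
  rewrite /E mulrA -expRD -expRB; congr expR; rewrite /e; ring.
rewrite /Nk natrM split.
have q := qk_le k.
have EtK := expR_gt0 (t * (k%:R + 3)).
have E0 : 0 < E := expR_gt0 _.
set X := expR (t * (k%:R + 3)) in q EtK split *.
set Y := expR (e * k%:R) in ex split *.
have g0 : 0 <= ((gk k)%:R : R) by [].
have G0 : 0 <= (G%:R : R) by [].
have gk_le : ((gk k)%:R : R) <= G%:R * (2 * k%:R).
  rewrite /gk natrM ler_wpM2l // -addn1 natrD; lra.
have step1 : (qk k)%:R * (gk k)%:R <= (4 * k%:R + 11) * X * (G%:R * (2 * k%:R)).
  apply: ler_pM => //; lra.
apply: (le_trans step1).
have A1 : (4 * k%:R + 11) * (2 * k%:R) <= 30 * (k%:R : R) ^+ 2 by nra.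
have A2 : 60 * (G%:R * E) * k%:R ^+ 2 <= k%:R ^+ 2 * (k%:R * e ^+ 3) / 6.
  have k20 : 0 <= (k%:R : R) ^+ 2 / 6 by apply: divr_ge0 => //; apply: exprn_ge0.
  have := ler_wpM2r k20 hK'; lra.
have A3 : (e * k%:R) ^+ 3 = k%:R ^+ 2 * (k%:R * e ^+ 3) by ring.
rewrite A3 in ex.
have Z0 : 0 <= G%:R * E by apply: mulr_ge0 => //; lra.
have A4 : (4 * k%:R + 11) * (2 * k%:R) * (G%:R * E) <= 30 * (k%:R : R) ^+ 2 * (G%:R * E).
  by apply: ler_wpM2r.
have A5 : (4 * k%:R + 11) * (G%:R * (2 * k%:R)) <= Y / E.
  rewrite ler_pdivlMr //.
  have -> : (4 * k%:R + 11) * (G%:R * (2 * k%:R)) * E = (4 * k%:R + 11) * (2 * k%:R) * (G%:R * E) by ring.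
  have : 0 <= G%:R * E * k%:R ^+ 2 by apply: mulr_ge0 => //; apply: exprn_ge0.
  lra.
rewrite -mulrA [X * _]mulrC -[X in _ <= X]mulrC.
by apply: le_trans (ler_wpM2r (ltW EtK) A5); rewrite !mulrA.
Qed.

Lemma expR1_ge2 : 2 <= expR (1 : R).
Proof. by have := @expR_ge1Dx R 1; rewrite (_ : 1 + 1 = 2 :> R) //. Qed.

Lemma F3 (C beta : R) k : 0 < C -> 0 < beta < 1 ->
  `|ln C| + 1 + 3 * t <= G%:R * (- ln beta) ->
  C * beta ^+ (gk k) <= mk k / 2.
Proof.
move=> C0 /andP[b0 b1] hG.
have lb : ln beta < 0 by apply: ln_lt0; rewrite b0 b1.
have eC : C = expR (ln C) by rewrite lnK // posrE.
have eb : beta = expR (ln beta) by rewrite lnK // posrE.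
rewrite [in leLHS]eC [in leLHS]eb -expRM_natl -expRD.
have h2 : expR (- (t * (k%:R + 3)) - 1) <= mk k / 2.
  rewrite expRB /mk; apply: ler_wpM2l; first exact: expR_ge0.
  rewrite lef_pV2 ?posrE ?expR_gt0 //; exact: expR1_ge2.
apply: le_trans h2; rewrite ler_expR.
have k0 : 0 <= (k%:R : R) by [].
have lC : ln C <= `|ln C| := ler_norm _.
have : (k.+1%:R : R) * (`|ln C| + 1 + 3 * t) <= (k.+1)%:R * (G%:R * - ln beta).
  by apply: ler_wpM2l.
rewrite /gk natrM -addn1 natrD.
have : 0 <= k%:R * `|ln C| by apply: mulr_ge0.
have : 0 <= k%:R * t by apply: mulr_ge0.
lra.
Qed.


Lemma F4 k : ((Num.truncn (expR (k%:R + 3 : R))).+1)%:R * (1 - mk k / 2) ^+ (qk k)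
  <= 1 / (2 ^ k.+1)%:R.
Proof.
have m0 := mk_gt0 k; have m1 := mk_le1 k.
set m := mk k in m0 m1 *.
have hq : 4 * k%:R + 10 <= (qk k)%:R * m.
  by rewrite -ler_pdivrMr //; exact: qk_ge.
have a1 : (1 - m / 2) ^+ (qk k) <= expR (- (2 * k%:R + 5)).
  apply: (@le_trans _ _ (expR (- (m / 2)) ^+ (qk k))).
    apply: lerXn2r; rewrite ?nnegrE; [lra | exact: expR_ge0 |].
    by have := @expR_ge1Dx R (- (m / 2)); rewrite -[1 - _]/(1 + - (m / 2)).
  rewrite -expRM_natl ler_expR; lra.
have E1 : 1 <= expR ((k%:R : R) + 3) by rewrite -expR0 ler_expR addr_ge0.
have a2 : (((Num.truncn (expR ((k%:R : R) + 3))).+1)%:R : R) <= 2 * expR (k%:R + 3).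
  rewrite -natr1.
  have h := truncn_le (expR ((k%:R : R) + 3)); rewrite expR_ge0 in h; lra.
have a3 : 2 * expR (k%:R + 3) * expR (- (2 * k%:R + 5)) = 2 * expR (- (k%:R + 2)) :> R.
  by rewrite -mulrA -expRD; congr (_ * expR _); ring.
have a4 : 2 * expR (- ((k%:R : R) + 2)) <= 1 / (2 ^ k.+1)%:R.
  rewrite expRN natrX ler_pdivlMr ?exprn_gt0 // mulrAC ler_pdivrMr ?expR_gt0 // mul1r.
  have -> : (k%:R + 2 : R) = (k.+2)%:R * 1.
    by rewrite mulr1 -(addn2 k) natrD.
  rewrite expRM_natl -exprS.
  apply: lerXn2r; rewrite ?nnegrE ?expR_ge0 //; exact: expR1_ge2.
apply: le_trans a4; rewrite -a3.
apply: ler_pM => //; first by apply: exprn_ge0; lra.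
Qed.

End Asym.

Lemma BC (R : realType) (d : measure_display) (X : measurableType d)
  (mu : {measure set X -> \bar R}) (F : nat -> set X) :
  (forall k, measurable (F k)) ->
  (forall k, (mu (F k) <= (1 / (2 ^ k.+1)%:R)%:E)%E) ->
  measurable (\bigcap_K \bigcup_(k in [set k | (K <= k)%N]) F k) /\
  mu (\bigcap_K \bigcup_(k in [set k | (K <= k)%N]) F k) = 0%E.
Proof.
move=> mF hF.
set N := \bigcap_K _.
have mN : measurable N.
  by apply: bigcap_measurableType => K _; apply: bigcup_measurable => k _.
split => //.
have tailK K : (mu N <= \sum_(K <= k <oo) mu (F k))%E.
  apply: measure_sigma_subadditive_tail => //.
  move=> x /(_ K I) [k /= Kk Fkx]; exists k => //=.
  by apply/negP; rewrite -leqNgt.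
have fin : (\sum_(0 <= k <oo) mu (F k) < +oo)%E.
  apply: (le_lt_trans (lee_nneseries (v := fun k => (1 / (2 ^ k.+1)%:R)%:E) _ _)).
  - by move=> i _ _; exact: measure_ge0.
  - by move=> n _; exact: hF.
  by apply: (le_lt_trans (epsilon_trick0 _ _)); rewrite ?ltry.
have cv := nneseries_tail_cvg fin (fun k _ => measure_ge0 mu (F k)).
apply/eqP; rewrite eq_le measure_ge0 andbT.
rewrite -(cvg_lim _ cv) //.
apply: lime_ge; first by apply/cvg_ex; eexists; exact: cv.
by apply: nearW => K; exact: tailK.
Qed.

Lemma limsup0_lt (R : realType) (g : R -> \bar R) (x : \bar R) : (limsup0 g < x)%E ->
  exists2 d : R, 0 < d & forall r, 0 < r < d -> (g r < x)%E.
Proof.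
move=> /ereal_inf_lt [_ [d /= d0 <-]] h; exists d => // r rd.
apply: le_lt_trans h; apply: ereal_sup_ubound; exists r => //.
Qed.

Lemma limsup0_le (R : realType) (g : R -> \bar R) (x : \bar R) (d : R) : 0 < d ->
  (forall r, 0 < r < d -> (g r <= x)%E) -> (limsup0 g <= x)%E.
Proof.
move=> d0 h; apply: ge_ereal_inf; exists (ereal_sup [set g r | r in [set r | 0 < r < d]]).
  by exists d.
by apply: ge_ereal_sup => _ [r /= rd <-]; exact: h.
Qed.

Lemma limsup0_ge (R : realType) (g : R -> \bar R) (x : \bar R) :
  (forall d : R, 0 < d -> exists2 r, 0 < r < d & (x <= g r)%E) -> (x <= limsup0 g)%E.
Proof.
move=> h; apply: le_ereal_inf_tmp => _ [d /= d0 <-].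
have [r rd xr] := h d d0.
by apply: le_ereal_sup_tmp; exists (g r) => //; exists r.
Qed.

Lemma lbr_ge0 (R : realType) (nu : probability R R) y r : 0 < r < 1 ->
  (0 <= log_ball_ratio nu y r)%E.
Proof.
move=> /andP[r0 r1]; rewrite /log_ball_ratio; case: ifPn => // h.
rewrite lee_fin; apply: mulr_le0.
  apply: ln_le0; rewrite -lee_fin fineK ?fin_num_measure //; last exact: measurable_ball.
  by apply: probability_le1; exact: measurable_ball.
by rewrite invr_le0; apply/ltW/ln_lt0; rewrite r0 r1.
Qed.

Lemma upper_dim_ge0 (R : realType) (nu : probability R R) y : (0 <= upper_dim nu y)%E.
Proof.
apply: limsup0_ge => d d0; exists (Num.min d 1 / 2).
  have h : 0 < Num.min d 1 by rewrite lt_min d0 ltr01.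
  have h2 : Num.min d 1 <= d by rewrite ge_min lexx.
  apply/andP; split; [by rewrite divr_gt0|lra].
apply: lbr_ge0.
have h : 0 < Num.min d 1 by rewrite lt_min d0 ltr01.
have h2 : Num.min d 1 <= 1 by rewrite ge_min lexx orbT.
apply/andP; split; [by rewrite divr_gt0|lra].
Qed.

Lemma lbr_lt (R : realType) (nu : probability R R) y r (t : R) : 0 < r < 1 ->
  (log_ball_ratio nu y r < t%:E)%E -> expR (t * ln r) < fine (nu (ball y r)).
Proof.
move=> /andP[r0 r1]; rewrite /log_ball_ratio; case: ifPn => // h.
have lr : ln r < 0 by apply: ln_lt0; rewrite r0 r1.
rewrite lte_fin ltr_ndivrMr // => h2.
have p0 : 0 < fine (nu (ball y r)).
  rewrite lt_neqAle eq_sym h /= fine_ge0 //; exact: measure_ge0.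
by rewrite -[X in _ < X]lnK ?posrE // ltr_expR.
Qed.

Lemma ltr_le (R : realType) (T : R -> R) x y r (u : R) (N k : nat) : 0 < r < 1 -> 0 <= u ->
  N%:R <= expR (u * k%:R) -> k%:R <= - ln r ->
  (exists j, (1 <= j <= N)%N /\ ball y r (iter j T x)) ->
  (log_tau_ratio T x y r <= u%:E)%E.
Proof.
move=> /andP[r0 r1] u0 hN hk [j [/andP[j1 jN] bj]].
rewrite /log_tau_ratio; case: pselect => [_|[]]; last by exists j.
set P := [set n : nat | _].
have exP : exists n, P n.
  have ex : exists n, (fun n => (1 <= n)%N && `[< ball y r (iter n T x) >]) n.
    by exists j; rewrite j1 /=; apply/asboolP.
  case: (ex_minnP ex) => n /andP[n1 /asboolP bn] nmin.
  exists n; split => //; split => // m m1 bm; apply: nmin; rewrite m1 /=; exact/asboolP.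
have [n1 [_ nmin]] := xgetPex 0%N exP.
set n := xget 0%N P in n1 nmin *.
have nj := nmin j j1 bj.
have lr : 0 < - ln r by rewrite oppr_gt0; apply: ln_lt0; rewrite r0 r1.
rewrite lee_fin ler_pdivrMr //.
have n0 : 0 < (n%:R : R) by rewrite ltr0n.
have N0 : 0 < (N%:R : R) by rewrite ltr0n; apply: leq_trans jN.
apply: (@le_trans _ _ (ln N%:R)).
  by rewrite ler_ln ?posrE // ler_nat (leq_trans nj).
apply: (@le_trans _ _ (u * k%:R)).
  by rewrite -[X in _ <= X]expRK ler_ln ?posrE ?expR_gt0.
by apply: ler_wpM2l.
Qed.

Section S.
Context {R : realType} (T : R -> R) (nu : probability R R).
Context (mT : measurable_fun I01 T) (TI : forall x, x \in I01 -> T x \in I01)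
  (nuI : nu I01 = 1%E) (inv : T_invariant T nu).

Lemma mI01 : measurable (I01 : set R).
Proof. exact: measurable_itv. Qed.

Lemma TI' x : I01 x -> I01 (T x).
Proof. by move=> h; apply/set_mem/TI/mem_set. Qed.

Lemma iterI n x : I01 x -> I01 (iter n T x).
Proof. by elim: n => //= n IH /IH; apply: TI'. Qed.

Lemma miter n : measurable_fun I01 (iter n T).
Proof.
elim: n => [|n IH] _ Y mY /=.
  by rewrite preimage_id; apply: measurableI => //; exact: mI01.
have -> : I01 `&` (fun x => T (iter n T x)) @^-1` Y =
  I01 `&` iter n T @^-1` (I01 `&` T @^-1` Y).
  apply/seteqP; split => x [/= h1 h2]; split => //.
  by split => //; apply: iterI.
  by case: h2.
apply: IH; first exact: mI01.
by apply: mT => //; exact: mI01.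
Qed.

Lemma nuC0 : nu (~` I01) = 0%E.
Proof. by rewrite probability_setC ?nuI ?subee //; exact: mI01. Qed.

Lemma nuI01 X : measurable X -> nu (I01 `&` X) = nu X.
Proof.
move=> mX.
have -> : nu X = (nu (X `\` I01) + nu (X `&` I01))%E := measureDI nu mX mI01.
have -> : nu (X `\` I01) = 0%E.
  by apply: (subset_measure0 (measurableD mX mI01) (measurableC mI01) _ nuC0) => x [].
by rewrite add0e setIC.
Qed.

Lemma inv_iter n B : measurable B -> nu (I01 `&` iter n T @^-1` B) = nu B.
Proof.
move=> mB; elim: n => [|n IH].
  by rewrite /= preimage_id nuI01.
have -> : I01 `&` iter n.+1 T @^-1` B = I01 `&` T @^-1` (I01 `&` iter n T @^-1` B).
  apply/seteqP; split => x [/= h1 h2]; split => //.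
    by split; [exact: TI'|rewrite -iterSr].
  by case: h2 => _; rewrite /= -iterSr.
rewrite inv //; apply: (miter n) => //; exact: mI01.
Qed.

Definition p (X : set R) : R := fine (nu X).

Lemma nuE {X : set R} : measurable X -> nu X = (p X)%:E.
Proof. by move=> mX; rewrite /p fineK // fin_num_measure. Qed.

Lemma p_ge0 X : 0 <= p X.
Proof. by rewrite /p fine_ge0 // measure_ge0. Qed.

Lemma p_le1 {X : set R} : measurable X -> p X <= 1.
Proof. by move=> mX; rewrite -lee_fin -nuE // probability_le1. Qed.

Lemma p_le X Y : measurable X -> measurable Y -> X `<=` Y -> p X <= p Y.
Proof. by move=> mX mY XY; rewrite -lee_fin -!nuE // le_measure // inE. Qed.

Context (C beta : R) (C0 : 0 < C) (b01 : 0 < beta < 1).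
Context (mix : forall (c r : R) (B : set R) (n : nat), c \in I01 -> measurable B -> (1 <= n)%N ->
      let A := ball c r `&` I01 in
      (`| nu (A `&` (iter n T) @^-1` B) - nu A * nu B | <= (C * beta ^+ n)%:E * nu B)%E).

Definition Miss (c r : R) (L : nat) : set R := I01 `&` [set x | forall j, (j < L)%N -> ~ ball c r (iter j T x)].

Lemma mMiss c r L : measurable (Miss c r L).
Proof.
elim: L => [|L IH].
  rewrite /Miss (_ : [set x | _] = setT) ?setIT; first exact: mI01.
  by apply/seteqP; split => x //=.
have -> : Miss c r L.+1 = Miss c r L `&` (I01 `&` iter L T @^-1` (~` ball c r)).
  rewrite /Miss; apply/seteqP; split => x.
    move=> [h1 h2]; split; first by split => // j jL; apply: h2; apply: ltnW.
    by split => //; apply: h2.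
  move=> [[h1 h2] [_ h3]]; split => // j; rewrite ltnS leq_eqVlt => /orP[/eqP->|]//.
  exact: h2.
apply: measurableI => //; apply: (miter L) => //; first exact: mI01.
apply: measurableC; exact: measurable_ball.
Qed.

Lemma Miss_step c r g L : c \in I01 -> (1 <= g)%N ->
  p (Miss c r (g + L)) <= p (Miss c r L) - (p (ball c r `&` I01) - C * beta ^+ g) * p (Miss c r L).
Proof.
move=> cI g1.
set A := ball c r `&` I01.
have mA : measurable A by apply: measurableI; [exact: measurable_ball|exact: mI01].
set M := Miss c r L.
have mM : measurable M := mMiss c r L.
set S := I01 `&` iter g T @^-1` M.
have mS : measurable S by apply: (miter g) => //; exact: mI01.
have mAg : measurable (A `&` iter g T @^-1` M).
  have -> : A `&` iter g T @^-1` M = A `&` S.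
    by apply/seteqP; split => x [h1 h2]; split => //; [split=> //; case: h1|case: h2].
  exact: measurableI.
have sub : Miss c r (g + L) `<=` S `\` A.
  rewrite /Miss; move=> x [xI h]; split.
    split => //=; split; first exact: iterI.
    by move=> j jL; rewrite -iterD; apply: h; rewrite addnC ltn_add2l.
  by move=> [bx _]; apply: (h 0%N) => //; rewrite addn_gt0 g1.
have h1 : p (Miss c r (g + L)) <= p (S `\` A).
  by apply: p_le => //; [exact: mMiss|exact: measurableD].
have h2 : p (S `\` A) = p M - p (A `&` iter g T @^-1` M).
  have e1 : nu (S `\` A) = (nu S - nu (S `&` A))%E  by apply: measureD => //; apply: (le_lt_trans (probability_le1 nu mS)); rewrite ltry.
  have e2 : S `&` A = A `&` iter g T @^-1` M.
    apply/seteqP; split => x; first by move=> [[_ h] a].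
    by move=> [a h]; split => //; split => //; case: a.
  have e3 : nu S = nu M := inv_iter g M mM.
  rewrite /p e1 e2 e3 (nuE mM) (nuE mAg) //.
have h3 := mix c r M g cI mM g1.
rewrite /= -/A (nuE mA) (nuE mM) (nuE mAg) -EFinM -EFinB -EFinM lee_fin in h3.
have h4 : p A * p M - C * beta ^+ g * p M <= p (A `&` iter g T @^-1` M).
  move: h3; rewrite ler_norml => /andP[h3 _]; lra.
rewrite (le_trans h1) // h2; lra.
Qed.


Lemma Miss_pow c r g m q : c \in I01 -> (1 <= g)%N -> m <= p (ball c r `&` I01) ->
  C * beta ^+ g <= m / 2 -> p (Miss c r (q * g)) <= (1 - m / 2) ^+ q.
Proof.
move=> cI g1 hm hg.
have mA : measurable (ball c r `&` I01) by apply: measurableI; [exact: measurable_ball|exact: mI01].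
have pA1 := p_le1 mA.
elim: q => [|q IH].
  by rewrite mul0n expr0; apply: p_le1; exact: mMiss.
rewrite mulSn exprS.
have h := @Miss_step c r g (q * g) cI g1.
have M0 := p_ge0 (Miss c r (q * g)).
set M := p (Miss c r (q * g)) in h M0 IH *.
set a := p (ball c r `&` I01) in h hm pA1.
have h2 : (m / 2) * M <= (a - C * beta ^+ g) * M by apply: ler_wpM2r => //; lra.
have h3 : (1 - m / 2) * M <= (1 - m / 2) * (1 - m / 2) ^+ q by apply: ler_wpM2l => //; lra.
lra.
Qed.

Definition Bad (c r : R) (N : nat) : set R := I01 `&` T @^-1` Miss c r N.

Lemma mBad c r N : measurable (Bad c r N).
Proof. by apply: mT; [exact: mI01|exact: mMiss]. Qed.

Lemma pBad c r N : p (Bad c r N) = p (Miss c r N).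
Proof. by rewrite /p /Bad inv //; exact: mMiss. Qed.

Lemma notBad c r N x : I01 x -> ~ Bad c r N x ->
  exists j, (1 <= j <= N)%N /\ ball c r (iter j T x).
Proof.
move=> xI nB.
have : ~ (forall j, (j < N)%N -> ~ ball c r (iter j T (T x))).
  by move=> h; apply: nB; split => //; split => //; exact: TI'.
move=> /existsNP [j /not_implyP [jN /contrapT bj]].
by exists j.+1; split => //; rewrite iterSr.
Qed.


Lemma ballE (c r z : R) : ball c r z = (`|c - z| < r).
Proof. by []. Qed.

Section TU.
Context (t u : R) (t0 : 0 <= t) (tu : t < u).

Definition GG := (Num.truncn ((`|ln C| + 1 + 3 * t) / (- ln beta))).+1.

Lemma lnb : 0 < - ln beta.
Proof. by rewrite oppr_gt0; apply: ln_lt0. Qed.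

Lemma hG : `|ln C| + 1 + 3 * t <= GG%:R * (- ln beta).
Proof.
rewrite -ler_pdivrMr ?lnb //; apply/ltW; exact: truncnS_gt.
Qed.

Definition hh (k : nat) : R := expR (- (k%:R + 3)).
Definition MM (k : nat) := Num.truncn (expR (k%:R + 3 : R)).
Definition cc k (i : nat) : R := i%:R * hh k.
Definition SS k i : set R :=
  if mk t k <= p (ball (cc k i) (2 * hh k) `&` I01)
  then Bad (cc k i) (2 * hh k) (Nk t GG k) else set0.
Definition FF k : set R := \big[setU/set0]_(i < (MM k).+1) SS k i.
Definition FF' k : set R := if (K0 t u GG <= k)%N then FF k else set0.

Lemma hh_gt0 k : 0 < hh k. Proof. exact: expR_gt0. Qed.

Lemma hhM k : hh k * expR (k%:R + 3) = 1.
Proof. by rewrite /hh -expRD addNr expR0. Qed.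

Lemma cc_I01 k i : (i <= MM k)%N -> cc k i \in I01.
Proof.
move=> iM; apply/mem_set; rewrite /I01 /= in_itv /=.
have h0 := hh_gt0 k.
apply/andP; split; first by rewrite /cc mulr_ge0 // ltW.
have h1 : (i%:R : R) <= expR (k%:R + 3).
  have := truncn_le (expR (k%:R + 3 : R)); rewrite expR_ge0 => h.
  by apply: le_trans h; rewrite ler_nat.
rewrite /cc -[X in _ <= X](hhM k) [X in X <= _]mulrC ler_pM2l //.
Qed.


Lemma mSS k i : measurable (SS k i).
Proof. by rewrite /SS; case: ifP => _; [exact: mBad|exact: measurable0]. Qed.

Lemma mFF' k : measurable (FF' k).
Proof.
rewrite /FF'; case: ifP => _; last exact: measurable0.
by apply: bigsetU_measurable => i _; exact: mSS.
Qed.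

Lemma GG_ge1 : (1 <= GG)%N. Proof. by []. Qed.

Lemma nuFF' k : (nu (FF' k) <= (1 / (2 ^ k.+1)%:R)%:E)%E.
Proof.
rewrite /FF'; case: ifPn => Kk; last by rewrite measure0 lee_fin divr_ge0.
have m0 := mk_gt0 t k; have m1 := @mk_le1 _ t t0 k.
set a := (1 - mk t k / 2) ^+ qk t k.
have a0 : 0 <= a by apply: exprn_ge0; lra.
have hS i : (i < (MM k).+1)%N -> (nu (SS k i) <= a%:E)%E.
  move=> iM; rewrite /SS; case: ifPn => hc; last by rewrite measure0 lee_fin.
  rewrite (nuE (mBad _ _ _)) lee_fin pBad /Nk.
  apply: Miss_pow => //.
  all: try exact: cc_I01.
  exact: (@F3 _ t t0 GG C beta k C0 b01 hG).
have h1 : (nu (FF k) <= \sum_(i < (MM k).+1) nu (SS k i))%E.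
  apply: (@content_subadditive _ _ _ nu (FF k) (SS k) (MM k).+1).
  - by move=> i _; exact: mSS.
  - by apply: bigsetU_measurable => i _; exact: mSS.
  - by [].
have h2 : (\sum_(i < (MM k).+1) nu (SS k i) <= \sum_(i < (MM k).+1) a%:E)%E.
  by apply: lee_sum => i _; apply: hS.
apply: (le_trans h1); apply: (le_trans h2).
rewrite sumEFin lee_fin sumr_const card_ord -[a *+ _]mulr_natl.
exact: (@F4 _ t t0 k).
Qed.


Lemma expR2_gt3 : 3 < expR (2 : R).
Proof.
have e := expR1_ge2 (R:=R).
have -> : (2 : R) = 2%:R * 1 by rewrite mulr1.
rewrite expRM_natl expr2; nra.
Qed.

Lemma good x K : x \in I01 -> (forall k, (K <= k)%N -> ~ FF' k x) ->
  forall y, y \in I01 -> (upper_dim nu y < t%:E)%E -> (upper_rec T x y <= u%:E)%E.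
Proof.
move=> xI hK y yI hy.
have xI' : I01 x by apply/set_mem.
have [d d0 hd] := @limsup0_lt R _ _ hy.
set K1 := maxn K (K0 t u GG).
set d' := Num.min d (expR (- (K1%:R + 1))).
have d'0 : 0 < d' by rewrite lt_min d0 expR_gt0.
apply: (@limsup0_le R _ _ d' d'0) => r /andP[r0 rd'].
have rd : r < d by move: rd'; rewrite lt_min => /andP[].
have re : r < expR (- (K1%:R + 1)) by move: rd'; rewrite lt_min => /andP[].
have r1 : r < 1.
  apply: lt_le_trans re _; rewrite expR_le1 oppr_le0; exact: addr_ge0.
have lr : K1%:R + 1 < - ln r.
  by rewrite ltrNr -ltr_expR lnK ?posrE.
have K1p : 0 <= (K1%:R : R) by [].
have nlr0 : 0 <= - ln r by lra.
set k := Num.truncn (- ln r).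
have kle : k%:R <= - ln r by have := truncn_le (- ln r); rewrite nlr0.
have kgt : - ln r < k.+1%:R by exact: truncnS_gt.
have Kk : (K1 <= k)%N by rewrite truncn_ge_nat //; lra.
have K0k : (K0 t u GG <= k)%N by apply: leq_trans Kk; exact: leq_maxr.
have KK : (K <= k)%N by apply: leq_trans Kk; exact: leq_maxl.
apply: (@ltr_le _ T x y r u (Nk t GG k) k) => //.
- by rewrite r0 r1.
- exact: (le_trans t0 (ltW tu)).
- exact: (@F2 _ t u t0 tu GG k K0k).
have h0 : 0 < hh k := hh_gt0 k.
have rk : expR (- (k%:R + 1)) < r.
  have kgt' : - ln r < k%:R + 1 by rewrite natr1.
  rewrite -[X in _ < X](lnK (x := r)) ?posrE // ltr_expR; lra.
have h3r : 3 * hh k < r.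
  apply: lt_trans rk.
  have -> : expR (- (k%:R + 1)) = expR 2 * hh k :> R by rewrite /hh -expRD; congr expR; ring.
  by rewrite ltr_pM2r // expR2_gt3.
have hr : hh k < r by lra.
have hd' : hh k < d by lra.
have h1 : hh k < 1 by lra.
have lbt := hd (hh k) ltac:(by rewrite h0 hd').
have := @lbr_lt R nu y (hh k) t ltac:(by rewrite h0 h1) lbt.
have -> : expR (t * ln (hh k)) = mk t k by rewrite /hh expRK /mk; congr expR; ring.
move=> mkp.
have [y0 y1] : 0 <= y /\ y <= 1.
  by move: yI; rewrite /I01 inE /= in_itv /= => /andP[].
set i := Num.truncn (y / hh k).
have yh0 : 0 <= y / hh k by rewrite divr_ge0 // ltW.
have iM : (i <= MM k)%N.
  rewrite /i /MM; apply: le_truncn.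
  by rewrite ler_pdivrMr // mulrC hhM.
have cy : cc k i <= y.
  have := truncn_le (y / hh k); rewrite yh0 /cc -/i => h.
  by rewrite -ler_pdivlMr.
have yc : y < cc k i + hh k.
  have := truncnS_gt (y / hh k); rewrite -/i /cc -natr1 ltr_pdivrMr // => h; lra.
have sub : ball y (hh k) `<=` ball (cc k i) (2 * hh k).
  move=> z; rewrite !ballE => hz.
  have : `|cc k i - z| <= `|cc k i - y| + `|y - z|.
    have -> : cc k i - z = (cc k i - y) + (y - z) by ring.
    exact: ler_normD.
  have : `|cc k i - y| < hh k by rewrite ltr_norml; apply/andP; split; lra.
  lra.
have mB : measurable (ball (cc k i) (2 * hh k)) by exact: measurable_ball.
have pc : mk t k <= p (ball (cc k i) (2 * hh k) `&` I01).
  rewrite /p setIC nuI01 // -/(p _).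
  apply/ltW/(lt_le_trans mkp); rewrite -/(p _).
  by apply: p_le => //; exact: measurable_ball.
have SSi : SS k i = Bad (cc k i) (2 * hh k) (Nk t GG k) by rewrite /SS pc.
have nB : ~ Bad (cc k i) (2 * hh k) (Nk t GG k) x.
  move=> bx; apply: (hK k KK); rewrite /FF' K0k /FF.
  by apply: (bigsetU_sup (i := i)); [rewrite ltnS | rewrite SSi].
have [j [jN bj]] := notBad _ _ _ _ xI' nB.
exists j; split => //.
move: bj; rewrite !ballE => bj.
have : `|y - iter j T x| <= `|y - cc k i| + `|cc k i - iter j T x|.
  have -> : y - iter j T x = (y - cc k i) + (cc k i - iter j T x) by ring.
  exact: ler_normD.
have : `|y - cc k i| < hh k by rewrite ltr_norml; apply/andP; split; lra.
lra.
Qed.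


Lemma ae_tu : {ae nu, forall x, x \in I01 -> forall y, y \in I01 ->
  (upper_dim nu y < t%:E)%E -> (upper_rec T x y <= u%:E)%E}.
Proof.
have [mN nuN] := @BC R _ _ nu FF' mFF' nuFF'.
eexists; split; [exact: mN|exact: nuN|].
move=> x /= nPx; apply: contrapT => nNx; apply: nPx.
move/existsNP: nNx => [K /not_implyP [_ hK]].
move=> xI; apply: (good x K xI) => k Kk Fk; apply: hK; exists k => //.
Qed.

End TU.
End S.

Theorem lemma5p4 (R : realType) (T : R -> R) (nu : probability R R) (s : R) :
  measurable_fun I01 T ->
  (forall x, x \in I01 -> T x \in I01) ->
  nu I01 = 1%E ->
  T_invariant T nu ->
  exp_mixing T nu ->
  0 <= s ->
  {ae nu, forall x, x \in I01 ->
     forall y, y \in I01 -> (s%:E <= upper_rec T x y)%E -> (s%:E <= upper_dim nu y)%E}.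
Proof.
move=> mT TI nuI inv [C [beta [C0 [b01 mix]]]] s0.
have [s00|sp] : s = 0 \/ 0 < s.
  by move: s0; rewrite le_eqVlt => /orP[/eqP<-|]; [left|right].
  by apply: aeW => x _ y _ _; rewrite s00; exact: upper_dim_ge0.
pose tj (j : nat) := s - s / (j.+1)%:R.
pose uj (j : nat) := s - s / (2 * (j.+1)%:R).
have H j : {ae nu, forall x, x \in I01 -> forall y, y \in I01 ->
    (upper_dim nu y < (tj j)%:E)%E -> (upper_rec T x y <= (uj j)%:E)%E}.
  have n0 : 0 < ((j.+1)%:R : R) by rewrite ltr0n.
  have n1 : 1 <= ((j.+1)%:R : R) by rewrite ler1n.
  apply: (@ae_tu R T nu mT TI nuI inv C beta C0 b01 mix (tj j) (uj j)).
  - rewrite /tj subr_ge0 ler_pdivrMr //.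
    by rewrite -[X in X <= _]mulr1 ler_wpM2l // ltW.
  - rewrite /tj /uj ltrD2l ltrN2 ltr_pM2l //.
    rewrite ltf_pV2 ?posrE ?mulr_gt0 //; lra.
have := ae_foralln H.
apply: filterS => x hx xI y yI hs.
rewrite leNgt; apply/negP => hd.
have d0 := @upper_dim_ge0 R nu y.
have Dfin : upper_dim nu y \is a fin_num.
  by rewrite ge0_fin_numE // (lt_trans hd) ?ltry.
set D := upper_dim nu y in hd d0 Dfin hx *.
have eD : D = (fine D)%:E by rewrite fineK.
set d := fine D in eD.
rewrite eD lte_fin in hd; rewrite eD lee_fin in d0.
set j := Num.truncn (s / (s - d)).
have sd : 0 < s - d by lra.
have hj : s / (s - d) < (j.+1)%:R by exact: truncnS_gt.
have n0 : 0 < ((j.+1)%:R : R) by rewrite ltr0n.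
have hj' : s / (j.+1)%:R < s - d.
  by rewrite ltr_pdivrMr // mulrC -ltr_pdivrMr.
have dt' : d < s - s / (j.+1)%:R by move: hj'; generalize (s / (j.+1)%:R) => a ha; lra.
have dt : (D < (tj j)%:E)%E by rewrite eD lte_fin.
have := hx j xI y yI dt.
have us : uj j < s.
  rewrite /uj; have : 0 < s / (2 * (j.+1)%:R) by rewrite divr_gt0 // mulr_gt0.
  generalize (s / (2 * (j.+1)%:R)) => a ha; lra.
move=> hu; have := le_trans hs hu; rewrite lee_fin; move: us; generalize (uj j) => a; lra.
Qed.
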